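(* Under the setting described in the context (conditions (V), (S), (C), compactly supported initial measure $\mu_0$, lattice approximate solution $\mu^N_t$), there is a constant $C$, independent of $l$ and $N$, such that $\|s[\mu^N_{t_l}]\|_{BL^*}\le C$ for all $l$ and $N$.
   Context: $\mathcal{M}^+(\mathbb{R}^k)$: finite nonnegative Borel measures; $\|f\|_{BL}=\max(\sup|f|,\operatorname{Lip}f)$, $\|\mu\|_{BL^*}=\sup\{\int\psi\,d\mu:\|\psi\|_{BL}\le1\}$. Conditions: (V) $V:\mathcal{M}^+(\mathbb{R}^d)\to\mathcal{M}^+(\mathbb{R}^d\times\mathbb{R}^d)$, $\pi_1^{\#}V[\mu]=\mu$; (V1) $\sup_{(x,v)\in\operatorname{supp}V[\mu]}|v|\le C_S(1+\sup_{(x,v)\in\operatorname{supp}V[\mu]}|x|)$; (V2) for each $R'>0$, $\|V[\mu]-V[\nu]\|_{BL^*}\le C_F(R')\|\mu-\nu\|_{BL^*}$ for $\mu,\nu$ supported in $B(0,R')$. (S) $s:\mathcal{M}^+(\mathbb{R}^d)\to\mathcal{M}^+(\mathbb{R}^d)$, (S1) $\|s[\mu]-s[\nu]\|_{BL^*}\le L\|\mu-\nu\|_{BL^*}$, (S2) $\operatorname{supp}s[\mu]\subseteq B(0,R)$ for all $\mu$. (C) $c:\mathbb{R}^d\times\mathcal{M}^+(\mathbb{R}^d)\to\mathbb{R}$, (C1) $|c|\le C_b$, (C2) $|c(x,\mu)-c(y,\nu)|\le C_L(|x-y|+\|\mu-\nu\|_{BL^*})$. Lattice scheme: fix $T>0$;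 $\Delta_N=1/N$; $x_1,\dots,x_I$ enumerate $(N^{-2}\mathbb{Z}^d)\cap[-N,N]^d$, $v_1,\dots,v_J$ enumerate $(N^{-1}\mathbb{Z}^d)\cap[-N,N]^d$; $Q_i=x_i+[0,\Delta_N^2)^d$, $Q'_j=v_j+[0,\Delta_N)^d$; $m_i^x(\mu)=\mu(Q_i)$, $m_{ij}^v(W)=W(Q_i\times Q'_j)$. Time points $t_l=l/N$, $l=0,\dots,M$, with the intervals $[t_l,t_{l+1})$ ($l<M$) and $[t_M,T]$ covering $[0,T]$, each of length at most $\Delta_N$. Set $\mu^N_0=\sum_i m_i^x(\mu_0)\delta_{x_i}$ and for $\tau\in[0,\Delta_N]$: $\mu^N_{t_l+\tau}=\tau\sum_i m_i^x(s[\mu^N_{t_l}])\delta_{x_i}+\sum_{i,j}m_{ij}^v(V[\mu^N_{t_l}])e^{c(x_i,\mu^N_{t_l})\tau}\delta_{x_i+\tau v_j}$. *)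

(* Defs.v *)
From HB Require Import structures.
From mathcomp Require Import all_boot all_order all_algebra.
From mathcomp Require Import all_classical all_reals all_analysis.
Set Implicit Arguments. Unset Strict Implicit. Unset Printing Implicit Defensive.
Import Order.TTheory GRing.Theory Num.Theory.
Import numFieldNormedType.Exports.
Local Open Scope classical_set_scope.
Local Open Scope ring_scope.

Definition eucl {R : realType} {d : nat} (x : 'rV[R]_d) : R :=
  Num.sqrt (\sum_(j < d) x ord0 j ^+ 2).

Definition Rd (R : realType) (d : nat) :=
  g_sigma_algebraType (@open 'rV[R]_d).
Definition Rdd (R : realType) (d : nat) :=
  g_sigma_algebraType (@open ('rV[R]_d * 'rV[R]_d)%type).

Definition distd {R : realType} {d : nat} (x y : Rd R d) : R :=
  eucl ((x : 'rV[R]_d) - (y : 'rV[R]_d)).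
Definition distdd {R : realType} {d : nat} (p q : Rdd R d) : R :=
  Num.sqrt (eucl (((p : 'rV[R]_d * 'rV[R]_d).1 : 'rV[R]_d) - (q : 'rV[R]_d * 'rV[R]_d).1) ^+ 2
          + eucl (((p : 'rV[R]_d * 'rV[R]_d).2 : 'rV[R]_d) - (q : 'rV[R]_d * 'rV[R]_d).2) ^+ 2).

Notation Mplus R d := {finite_measure set (Rd R d) -> \bar R}.
Notation Mplus2 R d := {finite_measure set (Rdd R d) -> \bar R}.

Definition BL1 {T : Type} {R : realType} (dist : T -> T -> R) : set (T -> R) :=
  [set psi | (forall x, `|psi x| <= 1) /\
             (forall x y, `|psi x - psi y| <= dist x y)].

Definition bl_dist {dd : measure_display} {T : measurableType dd} {R : realType}
  (dist : T -> T -> R) (mu nu : set T -> \bar R) : \bar R :=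
  ereal_sup [set ((\int[mu]_x (psi x)%:E) - (\int[nu]_x (psi x)%:E))%E
            | psi in BL1 dist].

Definition bl_norm {dd : measure_display} {T : measurableType dd} {R : realType}
  (dist : T -> T -> R) (mu : set T -> \bar R) : \bar R :=
  ereal_sup [set (\int[mu]_x (psi x)%:E)%E | psi in BL1 dist].

Definition supp {dd : measure_display} {T : measurableType dd} {R : realType}
  (dist : T -> T -> R) (mu : set T -> \bar R) : set T :=
  [set x | forall r : R, 0 < r -> (0 < mu [set y | (dist x y < r)%R])%E].

Definition cball {R : realType} {d : nat} (r : R) : set 'rV[R]_d :=
  [set x | eucl x <= r].

(* lattice points: x_i in (N^-2 Z^d) cap [-N,N]^d, indexed by integer offsets *)
Definition xidx (d N : nat) := {ffun 'I_d -> 'I_(2 * N ^ 3).+1}.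
Definition vidx (d N : nat) := {ffun 'I_d -> 'I_(2 * N ^ 2).+1}.

Definition latx {R : realType} {d N : nat} (i : xidx d N) : 'rV[R]_d :=
  \row_j (((i j : nat)%:R - (N ^ 3)%:R) / (N ^ 2)%:R).
Definition latv {R : realType} {d N : nat} (j : vidx d N) : 'rV[R]_d :=
  \row_k (((j k : nat)%:R - (N ^ 2)%:R) / N%:R).

Definition Qx {R : realType} {d N : nat} (i : xidx d N) : set 'rV[R]_d :=
  [set y | forall k, latx i ord0 k <= y ord0 k < latx i ord0 k + 1 / (N ^ 2)%:R].
Definition Qv {R : realType} {d N : nat} (j : vidx d N) : set 'rV[R]_d :=
  [set y | forall k, latv j ord0 k <= y ord0 k < latv j ord0 k + 1 / N%:R].

(* Main.v *)
Require Import Defs.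
From HB Require Import structures.
From mathcomp Require Import all_boot all_order all_algebra.
From mathcomp Require Import all_classical all_reals all_analysis.
From mathcomp Require Import ring lra.
Import Order.TTheory GRing.Theory Num.Theory.
Import numFieldNormedType.Exports.
Local Open Scope classical_set_scope.
Local Open Scope ring_scope.
Section Top.
Context (R : realType) (X : ptopologicalType).
Local Notation GX := (g_sigma_algebraType (@open X)).
Lemma open_meas (A : set GX) : open (A : set X) -> measurable A.
Proof. move=> oA. exact: sub_sigma_algebra. Qed.
Lemma meas_lt (f : X -> R) (b : R) : continuous f ->
  measurable ([set x | f x < b] : set GX).
Proof. move=> cf; apply: open_meas. apply: (open_comp (f := f) (D := [set y | y < b])).
 by move=> x _; apply: cf. exact: open_lt. Qed.
Lemma meas_ge (f : X -> R) (b : R) : continuous f ->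
  measurable ([set x | b <= f x] : set GX).
Proof. move=> cf. have -> : [set x | b <= f x] = ~` [set x | f x < b].
  by apply/seteqP; split => x /=; rewrite leNgt => /negP.
 by apply: measurableC; apply: meas_lt. Qed.
Lemma meas_box (I : finType) (f : I -> X -> R) (a b : I -> R) :
  (forall k, continuous (f k)) ->
  measurable ([set x | forall k, a k <= f k x < b k] : set GX).
Proof.
move=> cf.
have -> : [set x | forall k, a k <= f k x < b k] =
   \bigcap_(k in [set: I]) ([set x | a k <= f k x] `&` [set x | f k x < b k]).
  apply/seteqP; split => x /=.
    by move=> H k _; have /andP[] := H k.
  by move=> H k; have [] := H k Logic.I => -> ->.
apply: fin_bigcap_measurable; first exact: finite_finset.
by move=> k _; apply: measurableI; [apply: meas_ge|apply: meas_lt].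
Qed.
End Top.

Lemma cell_eq (R : realType) (u v : nat) (M Q y : R) : 0 < Q ->
  (u%:R - M) / Q <= y < (u%:R - M) / Q + 1 / Q ->
  (v%:R - M) / Q <= y < (v%:R - M) / Q + 1 / Q -> u = v.
Proof.
move=> Q0 /andP[h1 h2] /andP[h3 h4].
set A := (u%:R - M) / Q in h1 h2; set B := (v%:R - M) / Q in h3 h4.
have hu : u%:R = A * Q + M by rewrite /A divfK ?gt_eqF // subrK.
have hv : v%:R = B * Q + M by rewrite /B divfK ?gt_eqF // subrK.
have qQ : 1 / Q * Q = 1 by rewrite div1r mulVf // gt_eqF.
set q := 1 / Q in h2 h4 qQ.
have e1 : u%:R < v%:R + 1 :> R.
  rewrite hu hv; have : 0 < (B + q - A) * Q by apply: mulr_gt0 => //; lra.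
  nra.
have e2 : v%:R < u%:R + 1 :> R.
  rewrite hu hv; have : 0 < (A + q - B) * Q by apply: mulr_gt0 => //; lra.
  nra.
move: e1 e2; rewrite !natr1 !ltr_nat !ltnS => e1 e2.
by apply/eqP; rewrite eqn_leq e1 e2.
Qed.

Section Gen.
Context (R : realType) (dd : measure_display) (T : measurableType dd).

Lemma sum_measure_seq (mu : {measure set T -> \bar R}) (I : choiceType) (F : I -> set T) (s : seq I) :
  uniq s -> (forall i, measurable (F i)) ->
  (forall i j x, F i x -> F j x -> i = j) ->
  (\sum_(i <- s) mu (F i))%E = mu (\big[setU/set0]_(i <- s) F i).
Proof.
move=> us mF dF; elim: s us => [|a s IH] /=.
  by rewrite !big_nil measure0.
move=> /andP[as_ us]; rewrite !big_cons measureU //; first by rewrite IH.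
- exact: bigsetU_measurable.
- rewrite -bigcup_seq; apply/seteqP; split => // x [Fa [j /= js Fj]].
  have aj := dF _ _ _ Fa Fj; by move: as_; rewrite aj js.
Qed.

Lemma sum_fine_le (mu : {finite_measure set T -> \bar R}) (I : finType) (F : I -> set T) :
  (forall i, measurable (F i)) ->
  (forall i j x, F i x -> F j x -> i = j) ->
  \sum_(i : I) fine (mu (F i)) <= fine (mu setT).
Proof.
move=> mF dF; rewrite -lee_fin -sumEFin fineK; last exact: fin_num_measure.
rewrite (eq_bigr (fun i => mu (F i))); last first.
  by move=> i _; rewrite fineK //; exact: fin_num_measure.
rewrite sum_measure_seq //; last exact: index_enum_uniq.
apply: le_measure; rewrite ?inE //; last exact: bigsetU_measurable.
Qed.

Lemma nn_int_le (mu : {measure set T -> \bar R}) (f : T -> \bar R) :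
  (forall x, (0 <= f x)%E) -> (forall x, (f x <= 1)%E) -> (\int[mu]_x f x <= mu setT)%E.
Proof.
move=> f0 f1.
have -> : mu setT = (\int[mu]_x (cst 1%E) x)%E.
  by rewrite integral_cst // mul1e.
rewrite !ge0_integralTE //; apply: ereal_sup_le => _ [h hf <-]; exists h => //.
move=> x; exact: le_trans (hf x) (f1 x).
Qed.

Lemma int_le_mass (mu : {measure set T -> \bar R}) (psi : T -> R) :
  (forall x, `|psi x| <= 1) ->
  (\int[mu]_x (psi x)%:E <= mu setT)%E /\ (- mu setT <= \int[mu]_x (psi x)%:E)%E.
Proof.
move=> p1; rewrite integralE.
have hp : (\int[mu]_x ((fun x => (psi x)%:E)^\+ x) <= mu setT)%E.
  apply: nn_int_le => x; first exact: funepos_ge0.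
  rewrite funeposE ge_max lee01 andbT lee_fin.
  exact: le_trans (ler_norm _) (p1 x).
have hn : (\int[mu]_x ((fun x => (psi x)%:E)^\- x) <= mu setT)%E.
  apply: nn_int_le => x; first exact: funeneg_ge0.
  rewrite funenegE ge_max lee01 andbT -EFinN lee_fin.
  by apply: le_trans (ler_norm _) _; rewrite normrN.
split.
- rewrite -(sube0 (mu setT)); apply: leeB => //.
  apply: integral_ge0 => x _; exact: funeneg_ge0.
- rewrite -[X in (X <= _)%E]sub0e; apply: leeB => //.
  apply: integral_ge0 => x _; exact: funepos_ge0.
Qed.

Lemma bl_norm_le (dist : T -> T -> R) (mu : {measure set T -> \bar R}) :
  (bl_norm dist mu <= mu setT)%E.
Proof.
apply: ge_ereal_sup => _ [psi [p1 _] <-]; exact: (int_le_mass mu psi p1).1.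
Qed.

Lemma bl_dist_le (dist : T -> T -> R) (mu nu : {measure set T -> \bar R}) :
  (bl_dist dist mu nu <= mu setT + nu setT)%E.
Proof.
apply: ge_ereal_sup => _ [psi [p1 _] <-]; apply: leeD.
  exact: (int_le_mass mu psi p1).1.
rewrite leeNl; exact: (int_le_mass nu psi p1).2.
Qed.

Lemma bl_dist_ge0 (dist : T -> T -> R) (mu nu : {measure set T -> \bar R}) :
  (forall x y, 0 <= dist x y) -> (0 <= bl_dist dist mu nu)%E.
Proof.
move=> d0; apply: ereal_sup_ubound; exists (fun _ => 0).
  by split => [x|x y]; rewrite ?normr0 ?subr0 ?normr0.
by rewrite !integral0_eq // subee.
Qed.

Lemma int_one (mu : {measure set T -> \bar R}) :
  (\int[mu]_x ((fun _ : T => 1 : R) x)%:E = mu setT)%E.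
Proof. by rewrite integral_cst // mul1e. Qed.
End Gen.
Section Rd.
Context (R : realType) (d : nat).
Let PP : ptopologicalType := (('rV[R]_d * 'rV[R]_d)%type : normedModType R).

Lemma Qx_meas N (i : xidx d N) : measurable (Qx i : set (Rd R d)).
Proof.
apply: (@meas_box R _ _ (fun k (y : 'rV[R]_d) => y ord0 k)
   (fun k => latx i ord0 k) (fun k => latx i ord0 k + 1 / (N^2)%:R)).
move=> k; exact: coord_continuous.
Qed.

Lemma QQ_meas N (i : xidx d N) (j : vidx d N) :
  measurable (Qx i `*` Qv j : set (Rdd R d)).
Proof.
change (measurable ([set p : 'rV[R]_d * 'rV[R]_d | Qx i p.1] `&`
                    [set p : 'rV[R]_d * 'rV[R]_d | Qv j p.2] : set (Rdd R d))).
apply: measurableI.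
  apply: (@meas_box R PP _ (fun k (p : 'rV[R]_d * 'rV[R]_d) => p.1 ord0 k)
   (fun k => latx i ord0 k) (fun k => latx i ord0 k + 1 / (N^2)%:R)).
  move=> k p; apply: (@cvg_comp _ _ _ fst (fun M : 'rV[R]_d => M ord0 k) (nbhs p) (nbhs p.1)); [exact: cvg_fst | exact: coord_continuous].
apply: (@meas_box R PP _ (fun k (p : 'rV[R]_d * 'rV[R]_d) => p.2 ord0 k)
   (fun k => latv j ord0 k) (fun k => latv j ord0 k + 1 / N%:R)).
move=> k p; apply: (@cvg_comp _ _ _ snd (fun M : 'rV[R]_d => M ord0 k) (nbhs p) (nbhs p.2)); [exact: cvg_snd | exact: coord_continuous].
Qed.

Lemma Qx_disj N (i i' : xidx d N) (x : 'rV[R]_d) : (0 < N)%N ->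
  Qx i x -> Qx i' x -> i = i'.
Proof.
move=> N0 h1 h2; apply/ffunP => k; apply/val_inj.
have := h1 k; have := h2 k; rewrite !mxE => h2k h1k.
apply: (@cell_eq R _ _ (N^3)%:R (N^2)%:R (x ord0 k)) => //.
by rewrite ltr0n expn_gt0 N0.
Qed.

Lemma Qv_disj N (j j' : vidx d N) (x : 'rV[R]_d) : (0 < N)%N ->
  Qv j x -> Qv j' x -> j = j'.
Proof.
move=> N0 h1 h2; apply/ffunP => k; apply/val_inj.
have := h1 k; have := h2 k; rewrite !mxE => h2k h1k.
apply: (@cell_eq R _ _ (N^2)%:R N%:R (x ord0 k)) => //.
by rewrite ltr0n.
Qed.
End Rd.
Theorem corollary4p7 (R : realType) (d : nat) (T : R)
  (V : Mplus R d -> Mplus2 R d) (s : Mplus R d -> Mplus R d)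
  (c : 'rV[R]_d -> Mplus R d -> R)
  (C_S : R) (C_F : R -> R) (L Rs C_b C_L : R)
  (mu0 : Mplus R d)
  (muN : nat -> nat -> Mplus R d) :
  0 < T ->
  (* (V) *)
  (forall (mu : Mplus R d) (A : set (Rd R d)), measurable A ->
      V mu (A `*` setT) = mu A) ->
  (* (V1) *)
  0 <= C_S ->
  (forall (mu : Mplus R d) (p : 'rV[R]_d * 'rV[R]_d),
      supp distdd (V mu) p ->
      ((eucl p.2)%:E <= C_S%:E *
          (1 + ereal_sup [set (eucl q.1)%:E | q in supp distdd (V mu)]))%E) ->
  (* (V2) *)
  (forall R' : R, 0 < R' -> forall mu nu : Mplus R d,
      supp distd mu `<=` cball R' -> supp distd nu `<=` cball R' ->
      (bl_dist distdd (V mu) (V nu) <= (C_F R')%:E * bl_dist distd mu nu)%E) ->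
  (* (S1) *)
  (forall mu nu : Mplus R d,
      (bl_dist distd (s mu) (s nu) <= L%:E * bl_dist distd mu nu)%E) ->
  (* (S2) *)
  (forall mu : Mplus R d, supp distd (s mu) `<=` cball Rs) ->
  (* (C1) *)
  (forall x (mu : Mplus R d), `|c x mu| <= C_b) ->
  (* (C2) *)
  (forall x y (mu nu : Mplus R d),
      (`|c x mu - c y nu|%:E <= C_L%:E * ((distd x y)%:E + bl_dist distd mu nu))%E) ->
  (* compactly supported initial datum *)
  compact (supp distd mu0 : set 'rV[R]_d) ->
  (* lattice scheme: mu^N_{t_0} *)
  (forall N : nat, (0 < N)%N -> forall A : set (Rd R d), measurable A ->
      muN N 0%N A =
      (\sum_(i : xidx d N) fine (mu0 (Qx i)) * (\1_A (latx i) : R))%:E) ->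
  (* lattice scheme: mu^N_{t_{l+1}} = mu^N_{t_l + Delta_N}, for t_{l+1} <= T *)
  (forall (N l : nat), (0 < N)%N -> (l.+1)%:R / N%:R <= T ->
      forall A : set (Rd R d), measurable A ->
      muN N l.+1 A =
      (N%:R^-1 * (\sum_(i : xidx d N) fine (s (muN N l) (Qx i)) * (\1_A (latx i) : R))
       + \sum_(i : xidx d N) \sum_(j : vidx d N)
           fine (V (muN N l) (Qx i `*` Qv j)) *
           expR (c (latx i) (muN N l) * N%:R^-1) *
           (\1_A (latx i + N%:R^-1 *: latv j) : R))%:E) ->
  exists C : R, forall (N l : nat), (0 < N)%N -> l%:R / N%:R <= T ->
    (bl_norm distd (s (muN N l)) <= C%:E)%E.
Proof.
move=> T0 hV CS0 hV1 hV2 hS1 hS2 hC1 hC2 cmp hmu0 hrec.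
pose mass (m : Mplus R d) := fine (m setT).
have mass_ge0 m : 0 <= mass m by apply: fine_ge0; exact: measure_ge0.
have massE (m : Mplus R d) : m setT = (mass m)%:E by rewrite fineK //; exact: fin_num_measure.
have dist0 : forall x y : Rd R d, 0 <= distd x y by move=> x y; exact: sqrtr_ge0.
pose K := `|L|. pose M0 := mass mu0. pose S0 := mass (s mu0). pose a := S0 + K * M0.
have K0 : 0 <= K by exact: normr_ge0.
have a0 : 0 <= a by apply: addr_ge0; [exact: mass_ge0|apply: mulr_ge0 => //; exact: mass_ge0].
have Cb0 : 0 <= C_b := le_trans (normr_ge0 _) (hC1 0 mu0).
pose G := C_b * expR C_b. pose P := K + G + 1.
have G0 : 0 <= G by apply: mulr_ge0 => //; exact: expR_ge0.
have P0 : 0 <= P by rewrite /P; lra.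
exists (a + K * (expR (P * T) * (M0 + a))).
have F2 (m : Mplus R d) : mass (s m) <= a + K * mass m.
  have h1 : (s m setT - s mu0 setT <= bl_dist distd (s m) (s mu0))%E.
    apply: ereal_sup_ubound; exists (fun _ => 1).
      split => [x|x y]; first by rewrite normr1.
      by rewrite subrr normr0.
    by rewrite !int_one.
  have h2 := hS1 m mu0.
  have h3 : (L%:E * bl_dist distd m mu0 <= K%:E * (m setT + mu0 setT))%E.
    apply: le_trans (_ : K%:E * bl_dist distd m mu0 <= _)%E.
      apply: lee_wpmul2r; first exact: bl_dist_ge0.
      rewrite lee_fin; exact: ler_norm.
    apply: lee_wpmul2l; first by rewrite lee_fin.
    exact: bl_dist_le.
  have := le_trans h1 (le_trans h2 h3).
  rewrite !massE -EFinB -EFinD -EFinM lee_fin /a /S0 /M0 mulrDr => h; lra.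
have F3 N : (0 < N)%N -> mass (muN N 0) <= M0.
  move=> N0; rewrite /mass hmu0 //=.
  under eq_bigr do rewrite indicT mulr1.
  exact: (@sum_fine_le R _ (Rd R d) mu0 (xidx d N) (fun i => Qx i)
            (fun i => @Qx_meas R d N i) (fun i j x => @Qx_disj R d N i j x N0)).
have F4 N l : (0 < N)%N -> (l.+1)%:R / N%:R <= T ->
    mass (muN N l.+1) <= N%:R^-1 * mass (s (muN N l)) + expR (C_b * N%:R^-1) * mass (muN N l).
  move=> N0 hl; rewrite /mass hrec //= !indicT /=.
  under eq_bigr do rewrite mulr1.
  under [X in _ + X <= _]eq_bigr do under eq_bigr do rewrite mulr1.
  have n0 : 0 <= N%:R^-1 :> R by rewrite invr_ge0.
  apply: lerD.
    apply: ler_wpM2l => //.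
    exact: (@sum_fine_le R _ (Rd R d) (s (muN N l)) (xidx d N) (fun i => Qx i)
            (fun i => @Qx_meas R d N i) (fun i j x => @Qx_disj R d N i j x N0)).
  apply: le_trans (_ : \sum_(i : xidx d N) \sum_(j : vidx d N)
      fine (V (muN N l) (Qx i `*` Qv j)) * expR (C_b * N%:R^-1) <= _).
    apply: ler_sum => i _; apply: ler_sum => j _; apply: ler_wpM2l.
      by apply: fine_ge0; exact: measure_ge0.
    rewrite ler_expR; apply: ler_wpM2r => //.
    exact: le_trans (ler_norm _) (hC1 _ _).
  under eq_bigr do rewrite -big_distrl /=.
  rewrite -big_distrl /= mulrC; apply: ler_wpM2l; first exact: expR_ge0.
  rewrite pair_big /=.
  have := (@sum_fine_le R _ (Rdd R d) (V (muN N l)) (xidx d N * vidx d N)%type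
     (fun p => Qx p.1 `*` Qv p.2) (fun p => @QQ_meas R d N p.1 p.2) _).
  rewrite -setXTT hV //; apply.
  move=> [i j] [i' j'] x [h1 h2] [h3 h4].
  have e1 : i = i' := @Qx_disj R d N i i' x.1 N0 h1 h3.
  have e2 : j = j' := @Qv_disj R d N j j' x.2 N0 h2 h4.
  by rewrite e1 e2.
have F5 N : (0 < N)%N -> expR (C_b * N%:R^-1) <= 1 + G * N%:R^-1.
  move=> N0; set n := N%:R^-1.
  have n0 : 0 < n by rewrite invr_gt0 ltr0n.
  have n1 : n <= 1 by rewrite invf_le1 ?ltr0n // ler1n.
  set x := C_b * n.
  have x0 : 0 <= x by apply: mulr_ge0 => //; exact: ltW.
  have xC : x <= C_b by rewrite /x; apply: le_trans (_ : C_b * 1 <= _); [apply: ler_wpM2l | rewrite mulr1].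
  have e1 := expR_ge1Dx (- x).
  have e2 : expR x * expR (- x) = 1 by rewrite -expRD subrr expR0.
  have e3 : 0 <= expR x by exact: expR_ge0.
  have e4 : expR x <= 1 + x * expR x.
    have : expR x * (1 - x) <= expR x * expR (- x) by apply: ler_wpM2l.
    rewrite e2; nra.
  have e5 : x * expR x <= x * expR C_b by apply: ler_wpM2l => //; rewrite ler_expR.
  have e6 : x * expR C_b = G * n by rewrite /x /G; ring.
  lra.
have IND N : (0 < N)%N -> forall l, l%:R / N%:R <= T ->
    mass (muN N l) + a <= (1 + P * N%:R^-1) ^+ l * (M0 + a).
  move=> N0; elim => [|l IH] hl.
    by rewrite expr0 mul1r; have := F3 N N0; lra.
  have hl' : l%:R / N%:R <= T.
    apply: le_trans hl; apply: ler_wpM2r; first by rewrite invr_ge0.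
    by rewrite ler_nat.
  have := IH hl'; have := F4 N l N0 hl; have := F2 (muN N l); have := F5 N N0.
  have := mass_ge0 (muN N l).
  rewrite exprS.
  set n := N%:R^-1; set m := mass (muN N l); set m' := mass (muN N l.+1).
  set Z := (1 + P * n) ^+ l * (M0 + a); set ms := mass (s (muN N l)).
  set E := expR (C_b * n).
  move=> m0 h5 h2 h4 hZ.
  have n0 : 0 <= n by rewrite invr_ge0.
  have s1 : n * ms <= n * (a + K * m) by apply: ler_wpM2l.
  have s2 : E * m <= (1 + G * n) * m by apply: ler_wpM2r.
  have s3 : (1 + P * n) * (m + a) <= (1 + P * n) * Z.
    by apply: ler_wpM2l => //; apply: addr_ge0 => //; exact: mulr_ge0.
  have s4 : 0 <= n * m by exact: mulr_ge0.
  have s5 : 0 <= n * a * (K + G) by apply: mulr_ge0; [exact: mulr_ge0|lra].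
  have : (1 + P * n) * (m + a) = n * (a + K * m) + (1 + G * n) * m + a + n * m + n * a * (K + G).
    by rewrite /P; ring.
  by rewrite -[_ * _ * (M0 + a)]mulrA -/Z; lra.
move=> N l N0 hl.
apply: le_trans (@bl_norm_le R _ (Rd R d) distd (s (muN N l))) _.
apply: le_trans (_ : _ <= (mass (s (muN N l)))%:E)%E _.
  by rewrite /mass fineK //; exact: fin_num_measure.
rewrite lee_fin.
have pw : (1 + P * N%:R^-1) ^+ l <= expR (P * T).
  apply: le_trans (_ : expR (P * N%:R^-1) ^+ l <= _).
    apply: lerXn2r; last exact: expR_ge1Dx.
      rewrite nnegrE; apply: addr_ge0 => //; apply: mulr_ge0 => //; by rewrite invr_ge0.
    by rewrite nnegrE expR_ge0.
  rewrite -expRM_natl ler_expR.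
  have -> : l%:R * (P * N%:R^-1) = P * (l%:R / N%:R) by ring.
  exact: ler_wpM2l.
have := IND N N0 l hl; have := F2 (muN N l).
have := mass_ge0 (muN N l).
set m := mass (muN N l); set ms := mass (s (muN N l)).
move=> m0 h2 h1.
have h3 : (1 + P * N%:R^-1) ^+ l * (M0 + a) <= expR (P * T) * (M0 + a).
  apply: ler_wpM2r => //; apply: addr_ge0 => //; exact: mass_ge0.
have h4 : K * m <= K * (expR (P * T) * (M0 + a)) by apply: ler_wpM2l => //; lra.
lra.
Qed.
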